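(* Let $w\in\mathbb{R}^J_+\setminus\{0\}$. Then $$\mathscr{P}_1(w)=\sup_{\mu\in\mathbb{M}_1^J,\ \lambda\in\mathbb{L}^M}\Big\{\sum_{i\in\Omega}f_i(\mu_i,\lambda_i,w)-\beta(\mu,w)\ \Big|\ \mathbb{E}[\lambda]=0\Big\},$$ where for $i\in\Omega$, $\mu_i\in\mathbb{R}^J_+$, $\lambda_i\in\mathbb{R}^M$, $$f_i(\mu_i,\lambda_i,w)=\inf_{(x_i,y_i)\in\mathcal{F}_i}\Big(w^{\mathsf T}\big[\mu_i\cdot(Cx_i+Q_iy_i)\big]+p_i\lambda_i^{\mathsf T}x_i\Big).$$
   Context: Probability space: $\Omega=\{1,\dots,I\}$, $I\ge 2$, with probabilities $p_i>0$, $\sum_{i\in\Omega}p_i=1$. For an integer $J\ge1$, $\mathbb{L}^J$ denotes the set of random vectors $u:\Omega\to\mathbb{R}^J$, identified with tuples $(u_1,\dots,u_I)$, $u_i\in\mathbb{R}^J$; $\mathbb{L}^{J\times N}$ denotes random $J\times N$ matrices with realizations $Q_1,\dots,Q_I$; $\mathbb{L}^N_+$ the random vectors with nonnegative components; $\mathbb{E}[u]=\sum_{i}p_iu_i$. $u\le v$ means $u_i^j\le v_i^j$ for all $i,j$. A multivariate convex risk measure is a map $R:\mathbb{L}^J\to 2^{\mathbb{R}^J}$ such that: (A1) $u\le v$ implies $R(u)\supseteq R(v)$; (A2) $R(u+z)=R(u)+z$ for all $z\in\mathbb{R}^J$; (A3) $R(u)\notin\{\emptyset,\mathbb{R}^J\}$;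 (A4) $R(\gamma u+(1-\gamma)v)\supseteq\gamma R(u)+(1-\gamma)R(v)$ for $\gamma\in(0,1)$; (A5) the acceptance set $\mathcal{A}=\{u\in\mathbb{L}^J\mid 0\in R(u)\}$ is closed. $\mathbb{M}_1^J$ denotes the set of $J$-tuples $\mu=(\mu^1,\dots,\mu^J)$ of probability measures on $\Omega$, with $\mu_i=(\mu_i^1,\dots,\mu_i^J)^{\mathsf T}$, and $\mathbb{E}^\mu[u]=\sum_{i\in\Omega}\mu_i\cdot u_i$, where $\cdot$ is the componentwise (Hadamard) product. The minimal penalty function is $\beta(\mu,w)=\sup_{u\in\mathcal{A}}w^{\mathsf T}\mathbb{E}^\mu[u]$ for $\mu\in\mathbb{M}_1^J$, $w\in\mathbb{R}^J_+\setminus\{0\}$; it is known that $\inf_{z\in R(u)}w^{\mathsf T}z=\sup_{\mu\in\mathbb{M}_1^J}(w^{\mathsf T}\mathbb{E}^\mu[u]-\beta(\mu,w))$. Problem data: $A\in\mathbb{R}^{K\times M}$, $b\in\mathbb{R}^K$, $C\in\mathbb{R}^{J\times M}$, random $W\in\mathbb{L}^{L\times N}$, $T\in\mathbb{L}^{L\times M}$, $h\in\mathbb{L}^L$, $Q\in\mathbb{L}^{J\times N}$; $\mathcal{X}=\{(x,y)\in\mathbb{R}^M_+\times\mathbb{L}^N_+\mid Ax=b,\ T_ix+W_iy_i=h_i\ \forall i\in\Omega\}$, assumed nonempty and compact; $Cx+Qy$ has realizations $Cx+Q_iy_i$. For each $i\in\Omega$, $\mathcal{F}_i=\{(x_i,y_i)\in\mathbb{R}^M_+\times\mathbb{R}^N_+\mid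 Ax_i=b,\ T_ix_i+W_iy_i=h_i\}$, assumed nonempty and compact. $\mathscr{P}_1(w)$ is the optimal value of $\min w^{\mathsf T}z$ s.t. $z\in R(Cx+Qy)$, $(x,y)\in\mathcal{X}$, $z\in\mathbb{R}^J$. *)

(* Defs.v *)
From Stdlib Require Import Reals ClassicalEpsilon.
From mathcomp Require Import ssreflect ssrfun ssrbool eqtype ssrnat seq fintype bigop.

Set Implicit Arguments.
Unset Strict Implicit.
Local Open Scope R_scope.

Definition rsum (n : nat) (F : 'I_n -> R) : R := \big[Rplus/0%R]_(k < n) F k.

Definition vec (n : nat) := 'I_n -> R.
Definition dot (n : nat) (a b : vec n) : R := rsum (fun k => Rmult (a k) (b k)).
Definition matvec (m n : nat) (A : 'I_m -> 'I_n -> R) (x : vec n) : vec m :=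
  fun r => rsum (fun k => Rmult (A r k) (x k)).

(* random vectors on Omega = 'I_nI : u i is the realization u_i in R^n *)
Definition rvec (nI n : nat) := 'I_nI -> vec n.

Inductive Rbar := Fin (r : R) | PInf | MInf.

Definition Rbar_le (x y : Rbar) : Prop :=
  match x, y with
  | MInf, _ => True
  | _, PInf => True
  | Fin a, Fin b => Rle a b
  | _, _ => False
  end.

Definition is_lub_Rbar (S : Rbar -> Prop) (v : Rbar) : Prop :=
  (forall x, S x -> Rbar_le x v) /\
  (forall b, (forall x, S x -> Rbar_le x b) -> Rbar_le v b).
Definition is_glb_Rbar (S : Rbar -> Prop) (v : Rbar) : Prop :=
  (forall x, S x -> Rbar_le v x) /\
  (forall b, (forall x, S x -> Rbar_le b x) -> Rbar_le b v).

(* supremum / infimum in the extended reals (they always exist and are unique;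
   sup of the empty set is -oo, inf of the empty set is +oo) *)
Definition Rbar_sup (S : Rbar -> Prop) : Rbar := epsilon (inhabits MInf) (is_lub_Rbar S).
Definition Rbar_inf (S : Rbar -> Prop) : Rbar := epsilon (inhabits MInf) (is_glb_Rbar S).

(* arithmetic; the convention for (+oo) + (-oo) is irrelevant here *)
Definition Rbar_plus (x y : Rbar) : Rbar :=
  match x, y with
  | Fin a, Fin b => Fin (a + b)
  | MInf, _ | _, MInf => MInf
  | _, _ => PInf
  end.
Definition Rbar_opp (x : Rbar) : Rbar :=
  match x with Fin a => Fin (- a) | PInf => MInf | MInf => PInf end.
Definition Rbar_minus (x y : Rbar) : Rbar := Rbar_plus x (Rbar_opp y).
Definition Rbar_sum (n : nat) (F : 'I_n -> Rbar) : Rbar :=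
  \big[Rbar_plus/Fin 0%R]_(k < n) F k.

(* R : L^J -> 2^{R^J}, a set of vectors represented as a predicate *)
Definition set_valued (nI J : nat) := rvec nI J -> vec J -> Prop.

Definition is_mcrm (nI J : nat) (Rm : set_valued nI J) : Prop :=
  (* (A1) u <= v implies R(u) contains R(v) *)
  (forall u v : rvec nI J, (forall i j, Rle (u i j) (v i j)) ->
     forall z, Rm v z -> Rm u z) /\
  (* (A2) R(u + z) = R(u) + z *)
  (forall (u : rvec nI J) (z y : vec J),
     Rm (fun i j => u i j + z j) y <-> Rm u (fun j => y j - z j)) /\
  (forall u : rvec nI J, (exists z, Rm u z) /\ (exists z, ~ Rm u z)) /\
  (* (A4) R(g u + (1-g) v) contains g R(u) + (1-g) R(v) *)
  (forall (g : R) (u v : rvec nI J) (a b : vec J), 0 < g < 1 ->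
     Rm u a -> Rm v b ->
     Rm (fun i j => g * u i j + (1 - g) * v i j) (fun j => g * a j + (1 - g) * b j)) /\
  (* (A5) the acceptance set {u | 0 in R(u)} is closed (sequentially, in the
     finite-dimensional space L^J) *)
  (forall (s : nat -> rvec nI J) (u : rvec nI J),
     (forall n, Rm (s n) (fun _ => 0)) ->
     (forall i j, Un_cv (fun n => s n i j) (u i j)) ->
     Rm u (fun _ => 0)).

(* M_1^J : mu i j = mu^j_i, each mu^j a probability measure on Omega *)
Definition in_M1 (nI J : nat) (mu : 'I_nI -> vec J) : Prop :=
  (forall i j, Rle 0 (mu i j)) /\ (forall j, rsum (fun i => mu i j) = 1).

Definition Emu (nI J : nat) (mu : 'I_nI -> vec J) (u : rvec nI J) : vec J :=
  fun j => rsum (fun i => mu i j * u i j).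

Definition beta (nI J : nat) (Rm : set_valued nI J) (mu : 'I_nI -> vec J) (w : vec J) : Rbar :=
  Rbar_sup (fun v => exists u : rvec nI J, Rm u (fun _ => 0) /\ v = Fin (dot w (Emu mu u))).

Definition nonnegv (n : nat) (x : vec n) : Prop := forall k, Rle 0 (x k).

Definition in_X (nI K M N L : nat)
  (A : 'I_K -> 'I_M -> R) (b : vec K)
  (W : 'I_nI -> 'I_L -> 'I_N -> R) (T : 'I_nI -> 'I_L -> 'I_M -> R) (h : rvec nI L)
  (x : vec M) (y : rvec nI N) : Prop :=
  nonnegv x /\ (forall i, nonnegv (y i)) /\ matvec A x = b /\
  (forall i, (fun l => matvec (T i) x l + matvec (W i) (y i) l) = h i).

Definition in_F (nI K M N L : nat)
  (A : 'I_K -> 'I_M -> R) (b : vec K)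
  (W : 'I_nI -> 'I_L -> 'I_N -> R) (T : 'I_nI -> 'I_L -> 'I_M -> R) (h : rvec nI L)
  (i : 'I_nI) (x : vec M) (y : vec N) : Prop :=
  nonnegv x /\ nonnegv y /\ matvec A x = b /\
  (fun l => matvec (T i) x l + matvec (W i) y l) = h i.

Definition outcome (nI J M N : nat) (C : 'I_J -> 'I_M -> R) (Q : 'I_nI -> 'I_J -> 'I_N -> R)
  (x : vec M) (y : rvec nI N) : rvec nI J :=
  fun i j => matvec C x j + matvec (Q i) (y i) j.

Definition P1 (nI J K M N L : nat) (Rm : set_valued nI J)
  (A : 'I_K -> 'I_M -> R) (b : vec K) (C : 'I_J -> 'I_M -> R)
  (W : 'I_nI -> 'I_L -> 'I_N -> R) (T : 'I_nI -> 'I_L -> 'I_M -> R) (h : rvec nI L)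
  (Q : 'I_nI -> 'I_J -> 'I_N -> R) (w : vec J) : Rbar :=
  Rbar_inf (fun v => exists (z : vec J) (x : vec M) (y : rvec nI N),
     Rm (outcome C Q x y) z /\ in_X A b W T h x y /\ v = Fin (dot w z)).

Definition f_i (nI J K M N L : nat) (p : 'I_nI -> R)
  (A : 'I_K -> 'I_M -> R) (b : vec K) (C : 'I_J -> 'I_M -> R)
  (W : 'I_nI -> 'I_L -> 'I_N -> R) (T : 'I_nI -> 'I_L -> 'I_M -> R) (h : rvec nI L)
  (Q : 'I_nI -> 'I_J -> 'I_N -> R) (i : 'I_nI) (mui : vec J) (lami : vec M) (w : vec J) : Rbar :=
  Rbar_inf (fun v => exists (x : vec M) (y : vec N), in_F A b W T h i x y /\
     v = Fin (dot w (fun j => mui j * (matvec C x j + matvec (Q i) y j)) + p i * dot lami x)).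

(* Main.v *)
Require Import Defs.
From Stdlib Require Import Reals Lra Lia ClassicalEpsilon Classical FunctionalExtensionality PropExtensionality.
From HB Require Import structures.
From mathcomp Require Import ssreflect ssrfun ssrbool eqtype ssrnat seq fintype bigop.
Set Warnings "-notation-overridden -redundant-canonical-projection".
Set Implicit Arguments. Unset Strict Implicit.
Local Open Scope R_scope.
Lemma Rplus_assoc' : associative Rplus. Proof. move=> x y z; by rewrite Rplus_assoc. Qed.
HB.instance Definition _ := Monoid.isComLaw.Build R 0%R Rplus Rplus_assoc' Rplus_comm Rplus_0_l.
Lemma lub_ex (S : Rbar -> Prop) : exists v, is_lub_Rbar S v.
Proof.
destruct (classic (S PInf)) as [HP|HP].
  exists PInf; split; first by case.
  move=> b /(_ _ HP); by case: b.
destruct (classic (exists r, S (Fin r))) as [[r0 Hr0]|HF].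
  destruct (classic (exists M, forall r, S (Fin r) -> r <= M)) as [[M0 HM]|HU].
    have Hb : bound (fun r => S (Fin r)) by exists M0; move=> r Hr; apply HM.
    have [m [Hm1 Hm2]] := completeness _ Hb (ex_intro _ r0 Hr0).
    exists (Fin m); split.
      case=> //= r Hr; by apply Hm1.
    case=> [b'|//|] Hb'.
      apply Hm2 => r Hr; exact: (Hb' _ Hr).
    by have := Hb' _ Hr0.
  exists PInf; split; first by case.
  case=> [b'|//|] Hb'.
    exfalso; apply HU; exists b' => r Hr; exact: (Hb' _ Hr).
  by have := Hb' _ Hr0.
exists MInf; split.
  case=> [r Hr|Hr|//]; [exfalso; apply HF; by exists r | by []].
by case.
Qed.

Lemma glb_ex (S : Rbar -> Prop) : exists v, is_glb_Rbar S v.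
Proof.
destruct (classic (S MInf)) as [HP|HP].
  exists MInf; split; first by case.
  move=> b /(_ _ HP); by case: b.
destruct (classic (exists r, S (Fin r))) as [[r0 Hr0]|HF].
  destruct (classic (exists M, forall r, S (Fin r) -> M <= r)) as [[M0 HM]|HU].
    have Hb : bound (fun r => S (Fin (- r))).
      exists (- M0); move=> r Hr; have := HM _ Hr; lra.
    have Hr0' : S (Fin (- - r0)) by rewrite Ropp_involutive.
    have [m [Hm1 Hm2]] := completeness _ Hb (ex_intro _ (- r0) Hr0').
    exists (Fin (- m)); split.
      case=> //= r Hr.
      have : S (Fin (- - r)) by rewrite Ropp_involutive.
      move/Hm1; lra.
    case=> [b' Hb'|Hb'|//].
      rewrite /=; suff : m <= - b' by lra.
      apply Hm2 => r Hr; have := Hb' _ Hr; rewrite /=; lra.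
    by have := Hb' _ Hr0.
  exists MInf; split; first by case.
  case=> [b' Hb'|Hb'|//].
    exfalso; apply HU; exists b' => r Hr; exact: (Hb' _ Hr).
  by have := Hb' _ Hr0.
exists PInf; split.
  case=> [r Hr|//|Hr]; [exfalso; apply HF; by exists r | by []].
by case.
Qed.

Lemma sup_lub S : is_lub_Rbar S (Rbar_sup S).
Proof. rewrite /Rbar_sup; apply epsilon_spec; apply lub_ex. Qed.
Lemma inf_glb S : is_glb_Rbar S (Rbar_inf S).
Proof. rewrite /Rbar_inf; apply epsilon_spec; apply glb_ex. Qed.

Lemma Rbar_le_antisym x y : Rbar_le x y -> Rbar_le y x -> x = y.
Proof. case: x; case: y => //= a b H1 H2; f_equal; lra. Qed.

Lemma Rbar_le_trans x y z : Rbar_le x y -> Rbar_le y z -> Rbar_le x z.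
Proof. case: x; case: y; case: z => //= *; lra. Qed.

Lemma inf_fin (Q : R -> Prop) m :
  (exists v, Q v) -> (forall v, Q v -> m <= v) ->
  exists phi, Rbar_inf (fun t => exists v, Q v /\ t = Fin v) = Fin phi /\
   (forall v, Q v -> phi <= v) /\ (forall e, 0 < e -> exists v, Q v /\ v < phi + e).
Proof.
move=> [v0 Hv0] Hm.
have [H1 H2] := inf_glb (fun t => exists v, Q v /\ t = Fin v).
have Hl : Rbar_le (Rbar_inf (fun t => exists v, Q v /\ t = Fin v)) (Fin v0).
  apply H1; by exists v0.
have Hu : Rbar_le (Fin m) (Rbar_inf (fun t => exists v, Q v /\ t = Fin v)).
  apply H2 => t [v [Hv ->]]; by apply Hm.
move: H1 H2 Hl Hu; case: (Rbar_inf _) => // phi H1 H2 _ _.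
exists phi; split => //; split.
  move=> v Hv; by have := H1 (Fin v) (ex_intro _ v (conj Hv erefl)).
move=> e He; apply NNPP => Hn.
have : Rbar_le (Fin (phi + e)) (Fin phi).
  apply H2 => t [v [Hv ->]] /=.
  apply Rnot_lt_le => Hlt; apply Hn; by exists v.
rewrite /=; lra.
Qed.

Lemma sup_fin (Q : R -> Prop) m :
  (exists v, Q v) -> (forall v, Q v -> v <= m) ->
  exists phi, Rbar_sup (fun t => exists v, Q v /\ t = Fin v) = Fin phi /\
   (forall v, Q v -> v <= phi) /\ (forall e, 0 < e -> exists v, Q v /\ phi - e < v).
Proof.
move=> [v0 Hv0] Hm.
have [H1 H2] := sup_lub (fun t => exists v, Q v /\ t = Fin v).
have Hl : Rbar_le (Fin v0) (Rbar_sup (fun t => exists v, Q v /\ t = Fin v)).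
  apply H1; by exists v0.
have Hu : Rbar_le (Rbar_sup (fun t => exists v, Q v /\ t = Fin v)) (Fin m).
  apply H2 => t [v [Hv ->]]; by apply Hm.
move: H1 H2 Hl Hu; case: (Rbar_sup _) => // phi H1 H2 _ _.
exists phi; split => //; split.
  move=> v Hv; by have := H1 (Fin v) (ex_intro _ v (conj Hv erefl)).
move=> e He; apply NNPP => Hn.
have : Rbar_le (Fin phi) (Fin (phi - e)).
  apply H2 => t [v [Hv ->]] /=.
  apply Rnot_lt_le => Hlt; apply Hn; by exists v.
rewrite /=; lra.
Qed.
Definition sumI (I : finType) (F : I -> R) := \big[Rplus/0]_(k : I) F k.

Lemma rsumE n (F : 'I_n -> R) : rsum F = sumI F. Proof. by []. Qed.

Lemma sumI_ext (I : finType) (F G : I -> R) : (forall k, F k = G k) -> sumI F = sumI G.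
Proof. move=> H; apply: eq_bigr => k _; apply H. Qed.

Lemma sumI_plus (I : finType) (F G : I -> R) : sumI (fun k => F k + G k) = sumI F + sumI G.
Proof. by rewrite /sumI big_split. Qed.

Lemma sumI_scal (I : finType) c (F : I -> R) : sumI (fun k => c * F k) = c * sumI F.
Proof.
rewrite /sumI; symmetry; apply: (big_morph (fun x => c * x)).
  move=> x y /=; ring.
ring.
Qed.

Lemma sumI_scalr (I : finType) c (F : I -> R) : sumI (fun k => F k * c) = sumI F * c.
Proof. rewrite Rmult_comm -sumI_scal; apply sumI_ext => k; ring. Qed.

Lemma sumI_opp (I : finType) (F : I -> R) : sumI (fun k => - F k) = - sumI F.
Proof.
rewrite /sumI; symmetry; apply: (big_morph (fun x => - x)).
  move=> x y /=; ring.
ring.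
Qed.

Lemma sumI_minus (I : finType) (F G : I -> R) : sumI (fun k => F k - G k) = sumI F - sumI G.
Proof. by rewrite /Rminus sumI_plus sumI_opp. Qed.

Lemma sumI_0 (I : finType) : sumI (fun _ : I => 0) = 0.
Proof. rewrite /sumI; by rewrite big1. Qed.

Lemma sumI_le (I : finType) (F G : I -> R) : (forall k, F k <= G k) -> sumI F <= sumI G.
Proof.
move=> H; rewrite /sumI; apply: (big_ind2 (fun a b => a <= b)) => //.
  lra.
move=> *; lra.
Qed.

Lemma sumI_ge0 (I : finType) (F : I -> R) : (forall k, 0 <= F k) -> 0 <= sumI F.
Proof. move=> H; rewrite -(sumI_0 I); by apply sumI_le. Qed.

Lemma sumI_D1 (I : finType) (F : I -> R) j : sumI F = F j + \big[Rplus/0]_(k | k != j) F k.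
Proof. by rewrite /sumI (bigD1 j). Qed.

Lemma sumI_term (I : finType) (F : I -> R) j : (forall k, 0 <= F k) -> F j <= sumI F.
Proof.
move=> H; rewrite (sumI_D1 _ j).
have : 0 <= \big[Rplus/0]_(k | k != j) F k.
  apply: (big_ind (fun a => 0 <= a)) => //; [lra|move=> *; lra].
lra.
Qed.

Lemma sumI_eq0 (I : finType) (F : I -> R) j : (forall k, 0 <= F k) -> sumI F = 0 -> F j = 0.
Proof.
move=> H Hs; rewrite (sumI_D1 _ j) in Hs.
have : 0 <= \big[Rplus/0]_(k | k != j) F k.
  apply: (big_ind (fun a => 0 <= a)) => //; [lra|move=> *; lra].
have := H j; lra.
Qed.

Lemma sumI_sum (I1 I2 : finType) (F : I1 + I2 -> R) :
  sumI F = sumI (fun k => F (inl k)) + sumI (fun k => F (inr k)).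
Proof. by rewrite /sumI big_sumType. Qed.

Lemma sumI_pair (I1 I2 : finType) (F : I1 * I2 -> R) :
  sumI F = sumI (fun i => sumI (fun j => F (i, j))).
Proof. rewrite /sumI pair_big /=; by apply: eq_bigr => -[]. Qed.

Lemma sumI_exch (I1 I2 : finType) (F : I1 -> I2 -> R) :
  sumI (fun i => sumI (fun j => F i j)) = sumI (fun j => sumI (fun i => F i j)).
Proof. by rewrite /sumI exchange_big. Qed.

Lemma sumI_cv (I : finType) (F : nat -> I -> R) (G : I -> R) :
  (forall k, Un_cv (fun n => F n k) (G k)) -> Un_cv (fun n => sumI (F n)) (sumI G).
Proof.
move=> H; rewrite /sumI.
elim: (index_enum I) => [|k r IH].
  rewrite big_nil.
  have -> : (fun n => \big[Rplus/0]_(k <- [::]) F n k) = (fun _ => 0).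
    apply functional_extensionality => n; by rewrite big_nil.
  move=> e He; exists 0%nat => n _; rewrite /R_dist Rminus_0_r Rabs_R0; lra.
rewrite big_cons.
have -> : (fun n => \big[Rplus/0]_(j <- k :: r) F n j) =
          (fun n => F n k + \big[Rplus/0]_(j <- r) F n j).
  apply functional_extensionality => n; by rewrite big_cons.
by apply CV_plus.
Qed.

Lemma cv_unif (I : finType) (F : nat -> I -> R) (G : I -> R) :
  (forall k, Un_cv (fun n => F n k) (G k)) ->
  forall e, 0 < e -> exists N, forall n k, (N <= n)%nat -> Rabs (F n k - G k) < e.
Proof.
move=> H e He.
suff : forall r : seq I, exists N, forall n k, (N <= n)%nat -> k \in r -> Rabs (F n k - G k) < e.
  move=> /(_ (enum I)) [N HN]; exists N => n k Hn; apply HN => //; by rewrite mem_enum.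
elim=> [|k r [N HN]].
  by exists 0%nat => n k _; rewrite in_nil.
have [N1 HN1] := H k e He.
exists (Nat.add N N1) => n j Hn; rewrite in_cons => /orP [/eqP ->|Hj].
  apply HN1; move/leP: Hn => Hn; unfold ge; lia.
apply HN => //; apply/leP; move/leP: Hn; lia.
Qed.
Lemma abs_between x B : Rabs x <= B -> - B <= x /\ x <= B.
Proof. move=> H; have := Rle_abs x; have := Rle_abs (- x); rewrite Rabs_Ropp; lra. Qed.

Definition incr (phi : nat -> nat) := forall m, (phi m < phi (S m))%coq_nat.

Lemma incr_ge phi : incr phi -> forall m, (m <= phi m)%coq_nat.
Proof. move=> H; elim=> [|m IH]; first lia. have := H m; lia. Qed.

Lemma incr_mono phi : incr phi -> forall m n, (m <= n)%coq_nat -> (phi m <= phi n)%coq_nat.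
Proof.
move=> H m n Hmn; induction Hmn; first lia.
have := H m0; lia.
Qed.

Lemma incr_comp phi psi : incr phi -> incr psi -> incr (fun m => phi (psi m)).
Proof.
move=> H1 H2 m; have := H2 m => Hl.
have : (phi (S (psi m)) <= phi (psi (S m)))%coq_nat by apply incr_mono.
have := H1 (psi m); lia.
Qed.

Lemma cv_sub (u : nat -> R) l phi : incr phi -> Un_cv u l -> Un_cv (fun m => u (phi m)) l.
Proof.
move=> Hp H e He; have [N HN] := H e He; exists N => n Hn; apply HN.
have := incr_ge Hp n; unfold ge in *; lia.
Qed.

Lemma bw1 (u : nat -> R) B : (forall n, Rabs (u n) <= B) ->
  exists phi l, incr phi /\ Un_cv (fun m => u (phi m)) l.
Proof.
move=> HB.
have Hc := compact_P3 (- B) B.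
have HX : forall n, (fun c => - B <= c /\ c <= B) (u n).
  move=> n; have := HB n => /abs_between; lra.
have [l Hl] := Bolzano_Weierstrass u _ Hc HX.
have Hg : forall N m : nat, exists p, (N <= p)%coq_nat /\ Rabs (u p - l) < / (INR m + 1).
  move=> N m.
  have Hpos : 0 < / (INR m + 1).
    apply Rinv_0_lt_compat; have := pos_INR m; lra.
  have [p [Hp1 Hp2]] := Hl (disc l (mkposreal _ Hpos)) N (ex_intro _ (mkposreal _ Hpos) (fun y Hy => Hy)).
  by exists p; split.
pose gf N m := proj1_sig (constructive_indefinite_description _ (Hg N m)).
have Hgf : forall N m, (N <= gf N m)%coq_nat /\ Rabs (u (gf N m) - l) < / (INR m + 1).
  move=> N m; rewrite /gf; by case: (constructive_indefinite_description _ _).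
pose fix phi m := match m with 0 => gf 0%nat 0%nat | S m' => gf (S (phi m')) (S m') end.
exists phi, l; split.
  move=> m /=; have := (Hgf (S (phi m)) (S m)).1; lia.
move=> e He.
have [m0 Hm0] : exists m0 : nat, / (INR m0 + 1) < e.
  have [Hn1 Hn] := archimed (/ e).
  have Hz : (0 <= up (/ e))%Z.
    apply le_IZR; have : 0 < / e by apply Rinv_0_lt_compat.
    lra.
  exists (Z.to_nat (up (/ e))).
  rewrite INR_IZR_INZ Znat.Z2Nat.id //.
  have Hie : 0 < / e by apply Rinv_0_lt_compat.
  set z := IZR (up (/ e)) in Hn1 Hn Hz *.
  have Hee : e * / e = 1 by apply Rinv_r; lra.
  have H1 : 1 < (z + 1) * e by nra.
  apply (Rmult_lt_reg_l (z + 1)); first lra.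
  rewrite Rinv_r; lra.
exists m0 => n Hn; rewrite /R_dist.
have Hn' : forall n, Rabs (u (phi n) - l) < / (INR n + 1).
  case=> [|n'] /=; [exact: (Hgf _ _).2 | exact: (Hgf _ _).2].
apply: Rlt_le_trans (Hn' n) _.
apply: Rle_trans (Rlt_le _ _ Hm0).
apply Rinv_le_contravar; first by have := pos_INR m0; lra.
have := le_INR _ _ Hn; lra.
Qed.

Lemma bwI (I : finType) (s : nat -> I -> R) B : (forall n k, Rabs (s n k) <= B) ->
  exists phi (p : I -> R), incr phi /\ forall k, Un_cv (fun m => s (phi m) k) (p k).
Proof.
move=> HB.
suff : forall r : seq I, exists phi (p : I -> R), incr phi /\
   forall k, k \in r -> Un_cv (fun m => s (phi m) k) (p k).
  move=> /(_ (enum I)) [phi [p [H1 H2]]]; exists phi, p; split => // k.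
  apply H2; by rewrite mem_enum.
elim=> [|k0 r [phi [p [H1 H2]]]].
  exists id, (fun _ => 0); split => //; move=> m /=; lia.
have [psi [l [Hp Hc]]] := bw1 (fun m => HB (phi m) k0).
exists (fun m => phi (psi m)), (fun k => if k == k0 then l else p k); split.
  by apply incr_comp.
move=> k; rewrite in_cons; case: eqP => [-> _|_ /= Hk] //.
apply: (cv_sub (u := fun m => s (phi m) k)) => //; by apply H2.
Qed.

Lemma abs_ltb x B : Rabs x < B -> - B < x /\ x < B.
Proof. move=> H; have := Rle_abs x; have := Rle_abs (- x); rewrite Rabs_Ropp; lra. Qed.

Definition nsq (I : finType) (s : I -> R) := sumI (fun k => s k * s k).

Lemma cv_ge (u : nat -> R) l a : (forall n, a <= u n) -> Un_cv u l -> a <= l.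
Proof.
move=> H Hc; apply Rnot_lt_le => Hl.
have [N HN] := Hc (a - l) ltac:(lra).
have := HN N (le_n _); rewrite /Rdist => /abs_ltb.
have := H N; lra.
Qed.

Lemma cv_mult_c (u : nat -> R) l c : Un_cv u l -> Un_cv (fun n => c * u n) (c * l).
Proof. move=> H; apply CV_mult => //; move=> e He; exists 0%nat => n _; rewrite /R_dist Rminus_eq_0 Rabs_R0; lra. Qed.

Lemma cv_const c : Un_cv (fun _ => c) c.
Proof. move=> e He; exists 0%nat => n _; rewrite /R_dist Rminus_eq_0 Rabs_R0; lra. Qed.

Lemma sep (I : finType) (S : (I -> R) -> Prop) (q : I -> R) r :
  (forall s1 s2 g, S s1 -> S s2 -> 0 < g < 1 -> S (fun k => g * s1 k + (1 - g) * s2 k)) ->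
  (exists s, S s) -> 0 < r -> (forall s, S s -> r <= nsq (fun k => s k - q k)) ->
  exists v, forall s, S s -> r <= sumI (fun k => v k * (s k - q k)).
Proof.
move=> Hconv [s0 Hs0] Hr Hsr.
pose E := fun x => exists s, S s /\ x = - nsq (fun k => s k - q k).
have HEb : bound E.
  exists (- r) => x [s [Hs ->]]; have := Hsr _ Hs; lra.
have [m [Hm1 Hm2]] := completeness E HEb (ex_intro _ _ (ex_intro _ s0 (conj Hs0 erefl))).
set d2 := - m.
have Hd2r : r <= d2.
  suff : m <= - r by rewrite /d2; lra.
  apply Hm2 => x [s [Hs ->]]; have := Hsr _ Hs; lra.
have Hd2le : forall s, S s -> d2 <= nsq (fun k => s k - q k).
  move=> s Hs; have := Hm1 _ (ex_intro _ s (conj Hs erefl)); rewrite /d2; lra.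
have Hmin : forall n : nat, exists s, S s /\ nsq (fun k => s k - q k) < d2 + / (INR n + 1).
  move=> n; apply NNPP => Hn.
  have Hpos : 0 < / (INR n + 1) by apply Rinv_0_lt_compat; have := pos_INR n; lra.
  suff : m <= m - / (INR n + 1) by lra.
  apply Hm2 => x [s [Hs ->]].
  apply Rnot_lt_le => Hlt; apply Hn; exists s; split => //; rewrite /d2; lra.
pose sn n := epsilon (inhabits (fun _ : I => 0)) (fun s => S s /\ nsq (fun k => s k - q k) < d2 + / (INR n + 1)).
have Hsn : forall n, S (sn n) /\ nsq (fun k => sn n k - q k) < d2 + / (INR n + 1).
  move=> n; rewrite /sn; apply epsilon_spec; apply Hmin.
have Hinv1 : forall n, / (INR n + 1) <= 1.
  move=> n; rewrite -Rinv_1; apply Rinv_le_contravar; first lra.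
  have := pos_INR n; lra.
have Hbd : forall n k, Rabs (sn n k) <= sumI (fun k => Rabs (q k)) + (d2 + 2).
  move=> n k.
  have H1 : (sn n k - q k) * (sn n k - q k) <= nsq (fun k => sn n k - q k).
    apply: (@sumI_term _ (fun k => (sn n k - q k) * (sn n k - q k)) k) => j /=; exact: Rle_0_sqr.
  have H2 : Rabs (q k) <= sumI (fun k => Rabs (q k)).
    apply: (@sumI_term _ (fun k => Rabs (q k)) k) => j /=; apply Rabs_pos.
  have H3 := (Hsn n).2; have := Hinv1 n => H4.
  have H5 : Rabs (sn n k - q k) <= d2 + 2.
    have Hsq : Rabs (sn n k - q k) * Rabs (sn n k - q k) = (sn n k - q k) * (sn n k - q k).
      rewrite -Rabs_mult Rabs_right //; apply Rle_ge; exact: Rle_0_sqr.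
    have := Rabs_pos (sn n k - q k); nra.
  have := Rabs_triang (sn n k - q k) (q k); rewrite /Rminus Rplus_assoc Rplus_opp_l Rplus_0_r.
  rewrite /Rminus in H5; lra.
have [phi [p [Hphi Hp]]] := bwI Hbd.
have Hcvq : forall (y : I -> R) t, (forall k, Un_cv (fun m => y k) (y k)) ->
   Un_cv (fun m => nsq (fun k => t * y k + (1 - t) * sn (phi m) k - q k))
         (nsq (fun k => t * y k + (1 - t) * p k - q k)).
  move=> y t _; apply sumI_cv => k.
  have Hk : Un_cv (fun m => t * y k + (1 - t) * sn (phi m) k - q k) (t * y k + (1 - t) * p k - q k).
    apply CV_minus; last by apply cv_const.
    apply CV_plus; first by apply cv_const.
    by apply cv_mult_c.
  by apply CV_mult.
have Hpq : nsq (fun k => p k - q k) = d2.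
  have Hc := Hcvq (fun _ => 0) 0 (fun k => cv_const 0).
  have Heq : forall mm, nsq (fun k => 0 * 0 + (1 - 0) * sn (phi mm) k - q k) = nsq (fun k => sn (phi mm) k - q k).
    move=> mm; apply sumI_ext => k; ring.
  have Heq' : nsq (fun k => 0 * 0 + (1 - 0) * p k - q k) = nsq (fun k => p k - q k).
    apply sumI_ext => k; ring.
  rewrite Heq' in Hc.
  apply Rle_antisym.
    apply Rnot_lt_le => Hlt.
    set g := (nsq (fun k => p k - q k) - d2) / 2.
    have Hg : 0 < g by rewrite /g; lra.
    have [N HN] := Hc g Hg.
    pose n := Nat.max N (Z.to_nat (up (/ g))).
    have := HN n (Nat.le_max_l _ _); rewrite Heq /Rdist => /abs_ltb.
    have := (Hsn (phi n)).2.
    have : / (INR (phi n) + 1) < g.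
      have [Ha1 _] := archimed (/ g).
      have Hz : (0 <= up (/ g))%Z by apply le_IZR; have := Rinv_0_lt_compat _ Hg; lra.
      have Hle : (Z.to_nat (up (/ g)) <= phi n)%coq_nat.
        have := incr_ge Hphi n; have := Nat.le_max_r N (Z.to_nat (up (/ g))); rewrite -/n; lia.
      have := le_INR _ _ Hle; rewrite INR_IZR_INZ Znat.Z2Nat.id // => Hle2.
      have Hgg : g * / g = 1 by apply Rinv_r; lra.
      have H1 : 1 < (INR (phi n) + 1) * g by nra.
      apply (Rmult_lt_reg_l (INR (phi n) + 1)); first by have := pos_INR (phi n); lra.
      rewrite Rinv_r; first lra.
      have := pos_INR (phi n); lra.
    rewrite /g; lra.
  apply: (cv_ge (u := fun m => nsq (fun k => sn (phi m) k - q k))).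
    move=> n; apply Hd2le, Hsn.
  move=> e He; have [N HN] := Hc e He; exists N => n Hn; rewrite -Heq; by apply HN.
exists (fun k => p k - q k) => y Hy.
set D := sumI (fun k => (p k - q k) * (y k - p k)).
set Y := nsq (fun k => y k - p k).
have HY : 0 <= Y by apply sumI_ge0 => k; exact: Rle_0_sqr.
have Hexp : forall t, nsq (fun k => t * y k + (1 - t) * p k - q k) = d2 + 2 * t * D + t * t * Y.
  move=> t; rewrite -Hpq /D /Y /nsq -(sumI_scal (2 * t)) -(sumI_scal (t * t)) -!sumI_plus.
  apply sumI_ext => k; ring.
have Hineq : forall t, 0 < t < 1 -> 0 <= 2 * t * D + t * t * Y.
  move=> t Ht.
  have : d2 <= nsq (fun k => t * y k + (1 - t) * p k - q k).
    apply: (cv_ge (u := fun m => nsq (fun k => t * y k + (1 - t) * sn (phi m) k - q k))).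
      move=> n; apply Hd2le; apply Hconv => //; apply Hsn.
    apply Hcvq => k; apply cv_const.
  rewrite Hexp; lra.
have HD : 0 <= D.
  apply Rnot_lt_le => HD.
  pose t := Rmin (1/2) (- D / (Y + 1)).
  have Ht1 : t <= 1/2 by apply Rmin_l.
  have Ht2 : t <= - D / (Y + 1) by apply Rmin_r.
  have Ht0 : 0 < t.
    apply Rmin_pos; first lra.
    apply Rdiv_lt_0_compat; lra.
  have := Hineq t ltac:(lra).
  have : t * (Y + 1) <= - D.
    have := Rmult_le_compat_r (Y + 1) _ _ ltac:(lra) Ht2.
    rewrite /Rdiv Rmult_assoc Rinv_l; lra.
  nra.
have -> : sumI (fun k => (p k - q k) * (y k - q k)) = D + nsq (fun k => p k - q k).
  rewrite /D /nsq -sumI_plus; apply sumI_ext => k; ring.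
lra.
Qed.

Lemma inv_small e : 0 < e -> exists N : nat, / (INR N + 1) < e.
Proof.
move=> He.
have [Hn1 Hn] := archimed (/ e).
have Hz : (0 <= up (/ e))%Z.
  apply le_IZR; have : 0 < / e by apply Rinv_0_lt_compat.
  lra.
exists (Z.to_nat (up (/ e))).
rewrite INR_IZR_INZ Znat.Z2Nat.id //.
have Hie : 0 < / e by apply Rinv_0_lt_compat.
set z := IZR (up (/ e)) in Hn1 Hn Hz *.
have Hee : e * / e = 1 by apply Rinv_r; lra.
have H1 : 1 < (z + 1) * e by nra.
apply (Rmult_lt_reg_l (z + 1)); first lra.
rewrite Rinv_r; lra.
Qed.

Lemma inv_mono (N n : nat) : (N <= n)%coq_nat -> / (INR n + 1) <= / (INR N + 1).
Proof.
move=> H; apply Rinv_le_contravar; first by have := pos_INR N; lra.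
have := le_INR _ _ H; lra.
Qed.

Lemma sq_cv (a : nat -> R) : (forall n, a n * a n < / (INR n + 1)) -> Un_cv a 0.
Proof.
move=> H e He.
have [N HN] := @inv_small (e * e) ltac:(nra).
exists N => n Hn; rewrite /Rdist Rminus_0_r.
have := H n; have := inv_mono Hn => H1 H2.
apply Rnot_le_lt => Hle.
have : e * e <= Rabs (a n) * Rabs (a n) by nra.
rewrite -Rabs_mult Rabs_right; first lra.
apply Rle_ge; exact: Rle_0_sqr.
Qed.

Lemma cv_ext (u v : nat -> R) l : (forall n, u n = v n) -> Un_cv u l -> Un_cv v l.
Proof. move=> H Hc e He; have [N HN] := Hc e He; exists N => n Hn; rewrite -H; by apply HN. Qed.

Lemma cv_const_eq (u : nat -> R) l c0 : Un_cv u l -> (forall n, u n = c0) -> l = c0.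
Proof.
move=> Hc H; apply: (UL_sequence u) => //.
apply: (cv_ext (u := fun _ => c0)); first by move=> n; rewrite H.
by apply cv_const.
Qed.

Lemma matvec_cv m n (A : 'I_m -> 'I_n -> R) (xs : nat -> vec n) xl r :
  (forall k, Un_cv (fun mm => xs mm k) (xl k)) -> Un_cv (fun mm => matvec A (xs mm) r) (matvec A xl r).
Proof. move=> H; apply: sumI_cv => k; by apply cv_mult_c. Qed.

Lemma matvec_comb m n (A : 'I_m -> 'I_n -> R) (x1 x2 : vec n) g g' r :
  matvec A (fun k => g * x1 k + g' * x2 k) r = g * matvec A x1 r + g' * matvec A x2 r.
Proof.
rewrite /matvec !rsumE -!sumI_scal -sumI_plus; apply sumI_ext => k; ring.
Qed.

Lemma dot_comb n (w x1 x2 : vec n) g g' :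
  dot w (fun k => g * x1 k + g' * x2 k) = g * dot w x1 + g' * dot w x2.
Proof.
rewrite /dot !rsumE -!sumI_scal -sumI_plus; apply sumI_ext => k; ring.
Qed.

Lemma sum2_term (I1 I2 : finType) (F : I1 -> I2 -> R) i j :
  (forall i j, 0 <= F i j) -> F i j <= sumI (fun i => sumI (fun j => F i j)).
Proof.
move=> H; apply: Rle_trans (@sumI_term _ (fun j => F i j) j (H i)) _.
apply: (@sumI_term _ (fun i => sumI (fun j => F i j)) i) => k.
by apply sumI_ge0.
Qed.

Lemma lin_lemma r al be : (forall T, 0 <= T -> r <= al + T * be) -> 0 <= be.
Proof.
move=> H; apply Rnot_lt_le => Hb.
pose T := (Rabs al + Rabs r + 1) / (- be).
have HT : 0 <= T by apply Rmult_le_pos; [have := Rabs_pos al; have := Rabs_pos r; lra | left; apply Rinv_0_lt_compat; lra].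
have := H T HT.
have -> : T * be = - (Rabs al + Rabs r + 1) by rewrite /T; field; lra.
have := Rle_abs al; have := Rle_abs (- r); rewrite Rabs_Ropp; lra.
Qed.

Lemma sum2_zero (I1 I2 : finType) (F : I1 -> I2 -> R) :
  (forall i j, 0 <= F i j) -> sumI (fun i => sumI (fun j => F i j)) <= 0 -> forall i j, F i j = 0.
Proof. move=> H Hs i j; have := @sum2_term _ _ F i j H; have := H i j; lra. Qed.

Lemma sum1_zero (I1 : finType) (F : I1 -> R) :
  (forall i, 0 <= F i) -> sumI F <= 0 -> forall i, F i = 0.
Proof. move=> H Hs i; have := @sumI_term _ F i H; have := H i; lra. Qed.

Lemma sum2_lin (I1 I2 : finType) (F G : I1 -> I2 -> R) t :
  sumI (fun i => sumI (fun j => F i j + t * G i j)) =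
  sumI (fun i => sumI (fun j => F i j)) + t * sumI (fun i => sumI (fun j => G i j)).
Proof.
rewrite -sumI_scal -sumI_plus; apply sumI_ext => i.
by rewrite -sumI_scal -sumI_plus.
Qed.

Lemma sum2_exch_scal (I1 I2 : finType) (F : I1 -> I2 -> R) (G : I2 -> R) :
  sumI (fun i => sumI (fun j => F i j * G j)) = sumI (fun j => sumI (fun i => F i j) * G j).
Proof. rewrite sumI_exch; apply sumI_ext => j; by rewrite sumI_scalr. Qed.

Lemma Rbar_plus_le a b x y : Rbar_le a (Fin x) -> Rbar_le b (Fin y) -> Rbar_le (Rbar_plus a b) (Fin (x + y)).
Proof. case: a => [a| |]; case: b => [b| |] //=; lra. Qed.

Lemma Rbar_sum_le n (F : 'I_n -> Rbar) (G : 'I_n -> R) :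
  (forall i, Rbar_le (F i) (Fin (G i))) -> Rbar_le (Rbar_sum F) (Fin (sumI G)).
Proof.
move=> H; rewrite /Rbar_sum /sumI.
apply: (big_ind2 (fun a x => Rbar_le a (Fin x))) => //=.
- lra.
- move=> *; by apply Rbar_plus_le.
Qed.

Lemma Rbar_sum_fin n (F : 'I_n -> R) : Rbar_sum (fun i => Fin (F i)) = Fin (sumI F).
Proof.
rewrite /Rbar_sum /sumI; symmetry; apply: (big_morph Fin) => //.
Qed.

Lemma dens (L R : Rbar) (SL : Rbar -> Prop) : is_glb_Rbar SL L ->
  (forall c g, 0 < g -> (forall y, SL y -> Rbar_le (Fin (c + g)) y) -> Rbar_le (Fin c) R) -> Rbar_le L R.
Proof.
move=> [H1 H2] H; case: L H1 H2 => [l| |] H1 H2 //.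
- have Hg : forall g, 0 < g -> Rbar_le (Fin (l - g)) R.
    move=> g Hg; apply: (H _ g Hg) => y Hy.
    have -> : l - g + g = l by ring.
    by apply H1.
  case: R H Hg => [r| |] H Hg //=.
  + apply Rnot_lt_le => Hlt; have := Hg ((l - r) / 2) ltac:(lra); rewrite /=; lra.
  + by have := Hg 1 ltac:(lra).
- have Hc : forall c, Rbar_le (Fin c) R.
    move=> c; apply: (H c 1 ltac:(lra)) => y Hy.
    move: (H1 y Hy); clear Hy; by case: y.
  case: R H Hc => [r| |] H Hc //=.
  + by have := Hc (r + 1); rewrite /=; lra.
  + by have := Hc 0.
Qed.

Section Main.
Variables (nI J K M N L : nat).
Hypothesis (HI : (2 <= nI)%nat).
Variables (p : 'I_nI -> R).
Hypotheses (Hp : forall i, (0 < p i)%R) (Hp1 : rsum p = 1%R).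
Variable (Rm : set_valued nI J).
Hypothesis (HRm : is_mcrm Rm).
Variables (A : 'I_K -> 'I_M -> R) (b : vec K) (C : 'I_J -> 'I_M -> R)
  (W : 'I_nI -> 'I_L -> 'I_N -> R) (T : 'I_nI -> 'I_L -> 'I_M -> R) (h : rvec nI L)
  (Q : 'I_nI -> 'I_J -> 'I_N -> R).
Hypotheses (HXne : exists x y, in_X A b W T h x y)
  (HFne : forall i, exists x y, in_F A b W T h i x y)
  (HFbd : forall i, exists B : R, forall x y, in_F A b W T h i x y ->
            (forall k, (Rabs (x k) <= B)%R) /\ (forall k, (Rabs (y k) <= B)%R)).
Variable (w : vec J).
Hypothesis (Hw0 : nonnegv w).

Definition Acc (a : rvec nI J) := Rm a (fun _ => 0).

Lemma mono (u v : rvec nI J) : (forall i j, u i j <= v i j) -> Acc v -> Acc u.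
Proof. move=> H; have [A1 _] := HRm; by apply A1. Qed.

Lemma transl (u : rvec nI J) z : Rm u z <-> Acc (fun i j => u i j - z j).
Proof.
have [_ [A2 _]] := HRm.
have := A2 (fun i j => u i j - z j) z z.
have -> : (fun i j => u i j - z j + z j) = u.
  apply functional_extensionality => i; apply functional_extensionality => j; ring.
have -> : (fun j => z j - z j) = (fun _ => 0).
  apply functional_extensionality => j; ring.
done.
Qed.

Lemma Acc_ex : exists a, Acc a.
Proof.
have [_ [_ [A3 _]]] := HRm.
have [[z0 Hz0] _] := A3 (fun _ _ => 0).
exists (fun i j => 0 - z0 j); exact: (proj1 (transl _ _) Hz0).
Qed.

Definition uo (x : 'I_nI -> vec M) (y : 'I_nI -> vec N) : rvec nI J :=
  fun i j => matvec C (x i) j + matvec (Q i) (y i) j.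

Definition Idx := (('I_nI * 'I_J) + (('I_nI * 'I_M) + 'I_1))%type.

Definition mkpt (e : 'I_nI -> 'I_J -> R) (d : 'I_nI -> 'I_M -> R) (t : R) : Idx -> R :=
  fun k => match k with
           | inl ij => e ij.1 ij.2
           | inr (inl im) => d im.1 im.2
           | inr (inr _) => t end.

Lemma mkpt_sum (v : Idx -> R) e d t :
  sumI (fun k => v k * mkpt e d t k) =
  sumI (fun i => sumI (fun j => v (inl (i, j)) * e i j)) +
  (sumI (fun i => sumI (fun m => v (inr (inl (i, m))) * d i m)) + v (inr (inr ord0)) * t).
Proof.
rewrite sumI_sum sumI_pair; congr (_ + _).
rewrite sumI_sum sumI_pair; congr (_ + _).
by rewrite /sumI big_ord1.
Qed.


Definition qpt c := mkpt (fun _ _ => 0) (fun _ _ => 0) c.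

Lemma nsq_split e d t c :
  nsq (fun k => mkpt e d t k - qpt c k) =
  sumI (fun i => sumI (fun j => e i j * e i j)) +
  (sumI (fun i => sumI (fun m => d i m * d i m)) + (t - c) * (t - c)).
Proof.
have -> : (fun k => mkpt e d t k - qpt c k) = mkpt e d (t - c).
  apply functional_extensionality => -[[i j]|[[i m]|o]] /=; ring.
by rewrite /nsq mkpt_sum.
Qed.

Lemma nsq_bounds e d t c :
  (forall i j, e i j * e i j <= nsq (fun k => mkpt e d t k - qpt c k)) /\
  (forall i m, d i m * d i m <= nsq (fun k => mkpt e d t k - qpt c k)) /\
  (t - c) * (t - c) <= nsq (fun k => mkpt e d t k - qpt c k).
Proof.
rewrite nsq_split.
have H1 : 0 <= sumI (fun i => sumI (fun j => e i j * e i j)).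
  apply sumI_ge0 => ?; apply sumI_ge0 => ?; exact: Rle_0_sqr.
have H2 : 0 <= sumI (fun i => sumI (fun m => d i m * d i m)).
  apply sumI_ge0 => ?; apply sumI_ge0 => ?; exact: Rle_0_sqr.
have H3 := Rle_0_sqr (t - c); rewrite /Rsqr in H3.
split; [|split].
- move=> i j; have := @sum2_term _ _ (fun i j => e i j * e i j) i j (fun _ _ => Rle_0_sqr _); lra.
- move=> i m; have := @sum2_term _ _ (fun i m => d i m * d i m) i m (fun _ _ => Rle_0_sqr _); lra.
- lra.
Qed.

Definition Sset (c : R) (s : Idx -> R) : Prop :=
  exists (x : 'I_nI -> vec M) (y : 'I_nI -> vec N) (a : rvec nI J) (xb : vec M) (z : vec J) (t : R),
  (forall i, in_F A b W T h i (x i) (y i)) /\ Acc a /\ dot w z <= t /\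
  s = mkpt (fun i j => uo x y i j - a i j - z j) (fun i m => x i m - xb m) t.

Lemma inF_conv i x1 y1 x2 y2 g : in_F A b W T h i x1 y1 -> in_F A b W T h i x2 y2 -> 0 < g < 1 ->
  in_F A b W T h i (fun k => g * x1 k + (1 - g) * x2 k) (fun k => g * y1 k + (1 - g) * y2 k).
Proof.
move=> [H1 [H2 [H3 H4]]] [G1 [G2 [G3 G4]]] Hg; split; [|split; [|split]].
- move=> k; have := H1 k; have := G1 k; nra.
- move=> k; have := H2 k; have := G2 k; nra.
- apply functional_extensionality => r; rewrite matvec_comb H3 G3; ring.
- apply functional_extensionality => l; rewrite !matvec_comb.
  have E1 := f_equal (fun f => f l) H4; have E2 := f_equal (fun f => f l) G4; simpl in E1, E2.
  have -> : matvec (W i) y1 l = h i l - matvec (T i) x1 l by lra.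
  have -> : matvec (W i) y2 l = h i l - matvec (T i) x2 l by lra.
  ring.
Qed.

Lemma Sset_conv c s1 s2 g : Sset c s1 -> Sset c s2 -> 0 < g < 1 ->
  Sset c (fun k => g * s1 k + (1 - g) * s2 k).
Proof.
move=> [x1 [y1 [a1 [xb1 [z1 [t1 [H1 [H2 [H3 ->]]]]]]]]] [x2 [y2 [a2 [xb2 [z2 [t2 [G1 [G2 [G3 ->]]]]]]]]] Hg.
have [_ [_ [_ [A4 _]]]] := HRm.
exists (fun i k => g * x1 i k + (1 - g) * x2 i k), (fun i k => g * y1 i k + (1 - g) * y2 i k),
  (fun i j => g * a1 i j + (1 - g) * a2 i j), (fun k => g * xb1 k + (1 - g) * xb2 k),
  (fun j => g * z1 j + (1 - g) * z2 j), (g * t1 + (1 - g) * t2).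
split; [|split; [|split]].
- move=> i; by apply inF_conv.
- have := A4 g a1 a2 _ _ Hg H2 G2.
  have -> : (fun j : 'I_J => g * 0 + (1 - g) * 0) = (fun _ => 0).
    apply functional_extensionality => j; ring.
  done.
- rewrite dot_comb; nra.
- apply functional_extensionality => -[[i j]|[[i m]|o]] /=; rewrite /uo ?matvec_comb; ring.
Qed.

Lemma dist_pos c g : 0 < g ->
  (forall z x y, Rm (outcome C Q x y) z -> in_X A b W T h x y -> c + g <= dot w z) ->
  exists r, 0 < r /\ forall s, Sset c s -> r <= nsq (fun k => s k - qpt c k).
Proof.
move=> Hg Hopt; apply NNPP => Hn.
have H0 : forall n : nat, exists x : 'I_nI -> vec M, exists y : 'I_nI -> vec N,
  exists a : rvec nI J, exists xb : vec M, exists z : vec J, exists t : R,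
  (forall i, in_F A b W T h i (x i) (y i)) /\ Acc a /\ dot w z <= t /\
  nsq (fun k => mkpt (fun i j => uo x y i j - a i j - z j) (fun i m => x i m - xb m) t k - qpt c k)
    < / (INR n + 1).
  move=> n; apply NNPP => Hn2; apply Hn; exists (/ (INR n + 1)); split.
    apply Rinv_0_lt_compat; have := pos_INR n; lra.
  move=> s [x [y [a [xb [z [t [H1 [H2 [H3 ->]]]]]]]]].
  apply Rnot_lt_le => Hlt; apply Hn2; exists x, y, a, xb, z, t; split; [exact H1|split; [exact H2|split; [exact H3|exact Hlt]]].
have [xf H1] := choice _ H0.
have [yf H2] := choice _ H1.
have [af H3] := choice _ H2.
have [xbf H4] := choice _ H3.
have [zf H5] := choice _ H4.
have [tf H6] := choice _ H5.
clear H0 H1 H2 H3 H4 H5.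
have HF : forall n i, in_F A b W T h i (xf n i) (yf n i) by move=> n; case: (H6 n).
have HA : forall n, Acc (af n) by move=> n; case: (H6 n) => _ [].
have Hzt : forall n, dot w (zf n) <= tf n by move=> n; case: (H6 n) => _ [_ []].
have Hq : forall n, nsq (fun k => mkpt (fun i j => uo (xf n) (yf n) i j - af n i j - zf n j)
      (fun i m => xf n i m - xbf n m) (tf n) k - qpt c k) < / (INR n + 1).
  by move=> n; case: (H6 n) => _ [_ [_ ]].
clear H6.
set e := fun n i j => uo (xf n) (yf n) i j - af n i j - zf n j.
set d := fun n i m => xf n i m - xbf n m.
have He : forall i j, Un_cv (fun n => e n i j) 0.
  move=> i j; apply sq_cv => n; apply: Rle_lt_trans (Hq n); exact: (nsq_bounds _ _ _ _).1.
have Hd : forall i m, Un_cv (fun n => d n i m) 0.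
  move=> i m; apply sq_cv => n; apply: Rle_lt_trans (Hq n); exact: (nsq_bounds _ _ _ _).2.1.
have Ht : Un_cv (fun n => tf n - c) 0.
  apply sq_cv => n; apply: Rle_lt_trans (Hq n); exact: (nsq_bounds _ _ _ _).2.2.
have [Bf HBf] := choice _ HFbd.
pose xi n := fun k : (('I_nI * 'I_M) + ('I_nI * 'I_N))%type =>
  match k with inl im => xf n im.1 im.2 | inr il => yf n il.1 il.2 end.
have Hbd : forall n k, Rabs (xi n k) <= sumI (fun i => Rabs (Bf i)).
  move=> n [[i m]|[i l]] /=.
  - apply: Rle_trans ((HBf i _ _ (HF n i)).1 m) _.
    apply: Rle_trans (Rle_abs _) _.
    apply: (@sumI_term _ (fun i => Rabs (Bf i)) i) => ?; apply Rabs_pos.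
  - apply: Rle_trans ((HBf i _ _ (HF n i)).2 l) _.
    apply: Rle_trans (Rle_abs _) _.
    apply: (@sumI_term _ (fun i => Rabs (Bf i)) i) => ?; apply Rabs_pos.
have [phi [pl [Hphi Hpl]]] := bwI Hbd.
set xs := fun i m => pl (inl (i, m)).
set ys := fun i l => pl (inr (i, l)).
have Hxc : forall i m, Un_cv (fun mm => xf (phi mm) i m) (xs i m) by move=> i m; apply (Hpl (inl (i, m))).
have Hyc : forall i l, Un_cv (fun mm => yf (phi mm) i l) (ys i l) by move=> i l; apply (Hpl (inr (i, l))).
have HFl : forall i, in_F A b W T h i (xs i) (ys i).
  move=> i; split; [|split; [|split]].
  - move=> k; apply: (cv_ge _ (Hxc i k)) => n; exact: ((HF (phi n) i).1 k).
  - move=> k; apply: (cv_ge _ (Hyc i k)) => n; exact: ((HF (phi n) i).2.1 k).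
  - apply functional_extensionality => r.
    apply: (cv_const_eq (u := fun mm => matvec A (xf (phi mm) i) r)).
      by apply matvec_cv => k; apply Hxc.
    move=> n; by rewrite (HF (phi n) i).2.2.1.
  - apply functional_extensionality => l.
    apply: (cv_const_eq (u := fun mm => matvec (T i) (xf (phi mm) i) l + matvec (W i) (yf (phi mm) i) l)).
      by apply CV_plus; apply matvec_cv => k; [apply Hxc | apply Hyc].
    move=> n; exact: (f_equal (fun f => f l) (HF (phi n) i).2.2.2).
have Hxeq : forall i i' m, xs i m = xs i' m.
  have Hxb : forall i m, Un_cv (fun mm => xbf (phi mm) m) (xs i m).
    move=> i m.
    have := CV_minus _ _ _ _ (Hxc i m) (cv_sub Hphi (Hd i m)); rewrite Rminus_0_r.
    apply cv_ext => n; rewrite /d; ring.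
  move=> i i' m; exact: (UL_sequence _ _ _ (Hxb i m) (Hxb i' m)).
have Hn0 : (0 < nI)%N by apply: leq_trans _ HI.
pose i0 : 'I_nI := Ordinal Hn0.
pose x0 := xs i0.
have Hx0 : forall i, xs i = x0.
  move=> i; apply functional_extensionality => m; apply Hxeq.
have HXin : in_X A b W T h x0 ys.
  split; [|split; [|split]].
  - exact: (HFl i0).1.
  - move=> i; exact: (HFl i).2.1.
  - exact: (HFl i0).2.2.1.
  - move=> i; rewrite -(Hx0 i); exact: (HFl i).2.2.2.
have Hu : forall ij : ('I_nI * 'I_J)%type,
   Un_cv (fun mm => uo (xf (phi mm)) (yf (phi mm)) ij.1 ij.2) (outcome C Q x0 ys ij.1 ij.2).
  move=> [i j] /=; rewrite /outcome -(Hx0 i).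
  by apply CV_plus; apply matvec_cv => k; [apply Hxc | apply Hyc].
have Hes : forall ij : ('I_nI * 'I_J)%type, Un_cv (fun mm => e (phi mm) ij.1 ij.2 - 0) 0.
  move=> [i j] /=; apply: cv_ext (cv_sub Hphi (He i j)) => n; ring.
set Sw := sumI w.
have HSw : 0 <= Sw by apply sumI_ge0 => j; apply Hw0.
set eps := g / (2 * (1 + 2 * Sw)).
have Heps : 0 < eps by apply Rdiv_lt_0_compat; lra.
have Heps2 : eps * (1 + 2 * Sw) = g / 2.
  rewrite /eps; field; lra.
have [N1 HN1] := cv_unif Hu Heps.
have [N2 HN2] := cv_unif Hes Heps.
have [N3 HN3] := cv_sub Hphi Ht Heps.
pose mm := Nat.add N1 (Nat.add N2 N3).
pose n := phi mm.
have Hacc : Acc (fun i j => outcome C Q x0 ys i j - (zf n j + 2 * eps)).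
  apply: (mono _ (HA n)) => i j.
  have := HN1 mm (i, j) ltac:(apply/leP; rewrite /mm; lia).
  have := HN2 mm (i, j) ltac:(apply/leP; rewrite /mm; lia).
  rewrite /= /e -/n => /abs_ltb H7 /abs_ltb H8; lra.
have HRz : Rm (outcome C Q x0 ys) (fun j => zf n j + 2 * eps).
  by apply/transl.
have := Hopt _ _ _ HRz HXin.
have -> : dot w (fun j => zf n j + 2 * eps) = dot w (zf n) + 2 * eps * Sw.
  rewrite /dot !rsumE /Sw -sumI_scal -sumI_plus; apply sumI_ext => j; ring.
have := Hzt n.
have := HN3 mm ltac:(rewrite /mm; unfold ge; lia); rewrite /Rdist Rminus_0_r -/n => /abs_ltb.
nra.
Qed.

Lemma KI_form (v : Idx -> R) e d t c :
  sumI (fun k => v k * (mkpt e d t k - qpt c k)) =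
  sumI (fun i => sumI (fun j => v (inl (i, j)) * e i j)) +
  (sumI (fun i => sumI (fun m => v (inr (inl (i, m))) * d i m)) + v (inr (inr ord0)) * (t - c)).
Proof.
rewrite -mkpt_sum; apply sumI_ext => -[[i j]|[[i m]|o]] /=; ring.
Qed.

Lemma core c g : 0 < g ->
  (forall z x y, Rm (outcome C Q x y) z -> in_X A b W T h x y -> c + g <= dot w z) ->
  exists (mu : 'I_nI -> vec J) (lam : rvec nI M), in_M1 mu /\
    (forall k, rsum (fun i => p i * lam i k) = 0) /\
    forall (x : 'I_nI -> vec M) (y : 'I_nI -> vec N) (a : rvec nI J),
      (forall i, in_F A b W T h i (x i) (y i)) -> Acc a ->
      c <= sumI (fun i => dot w (fun j => mu i j * uo x y i j) + p i * dot (lam i) (x i))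
           - dot w (Emu mu a).
Proof.
move=> Hg Hopt.
have [r [Hr Hdist]] := dist_pos Hg Hopt.
have [x0 [y0 HX0]] := HXne.
have HF0 : forall i, in_F A b W T h i x0 (y0 i).
  move: HX0 => [H1 [H2 [H3 H4]]] i; split => //; split => //; split => //.
have [a0 Ha0] := Acc_ex.
pose xs := fun _ : 'I_nI => x0.
have Sne : exists s, Sset c s.
  exists (mkpt (fun i j => uo xs y0 i j - a0 i j - 0) (fun i m => xs i m - 0) (dot w (fun _ => 0))).
  by exists xs, y0, a0, (fun _ => 0), (fun _ => 0), (dot w (fun _ => 0)); split => //; split => //; split; [right|].
have [v Hv] := sep (@Sset_conv c) Sne Hr Hdist.
set V := fun i j => v (inl (i, j)).
set eta := fun i m => v (inr (inl (i, m))).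
set sg := v (inr (inr ord0)).
have KI : forall x y a xb z t, (forall i, in_F A b W T h i (x i) (y i)) -> Acc a -> dot w z <= t ->
  r <= sumI (fun i => sumI (fun j => V i j * (uo x y i j - a i j - z j))) +
       (sumI (fun i => sumI (fun m => eta i m * (x i m - xb m))) + sg * (t - c)).
  move=> x y a xb z t H1 H2 H3.
  rewrite -KI_form; apply Hv.
  by exists x, y, a, xb, z, t.
have Hdot0 : dot w (fun _ => 0) = 0.
  rewrite /dot rsumE; transitivity (sumI (fun _ : 'I_J => 0)); [apply sumI_ext => j; ring | apply sumI_0].
have Hsg : 0 <= sg.
  apply: (lin_lemma (r := r) (al := sumI (fun i => sumI (fun j => V i j * (uo xs y0 i j - a0 i j - 0))) +
       sumI (fun i => sumI (fun m => eta i m * (xs i m - 0))) - sg * c)) => T0 HT0.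
  have := KI xs y0 a0 (fun _ => 0) (fun _ => 0) T0 HF0 Ha0 ltac:(rewrite Hdot0; lra).
  lra.
have HV : forall i j, 0 <= V i j.
  have Hb : 0 <= - sumI (fun i => sumI (fun j => V i j * Rmin (V i j) 0)).
    apply: (lin_lemma (r := r) (al := sumI (fun i => sumI (fun j => V i j * (uo xs y0 i j - a0 i j - 0))) +
       (sumI (fun i => sumI (fun m => eta i m * (xs i m - 0))) + sg * (0 - c)))) => T0 HT0.
    have HA : Acc (fun i j => a0 i j + T0 * Rmin (V i j) 0).
      apply: (mono _ Ha0) => i j; have := Rmin_r (V i j) 0; nra.
    have := KI xs y0 _ (fun _ => 0) (fun _ => 0) 0 HF0 HA ltac:(rewrite Hdot0; lra).
    have -> : sumI (fun i => sumI (fun j => V i j * (uo xs y0 i j - (a0 i j + T0 * Rmin (V i j) 0) - 0))) =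
       sumI (fun i => sumI (fun j => V i j * (uo xs y0 i j - a0 i j - 0))) +
       T0 * (- sumI (fun i => sumI (fun j => V i j * Rmin (V i j) 0))).
      rewrite -sumI_opp -sumI_scal -sumI_plus; apply sumI_ext => i; rewrite -sumI_opp -sumI_scal -sumI_plus; apply sumI_ext => j; ring.
    lra.
  have Hz := @sum2_zero _ _ (fun i j => V i j * Rmin (V i j) 0) ltac:(move=> i j /=; rewrite /Rmin; case: Rle_dec => ?; nra) ltac:(lra).
  move=> i j; have := Hz i j; rewrite /Rmin; case: Rle_dec => H; nra.
set Hm := fun m => sumI (fun i => eta i m).
have Heta : forall m, Hm m = 0.
  have Hb : 0 <= - sumI (fun m => Hm m * Hm m).
    apply: (lin_lemma (r := r) (al := sumI (fun i => sumI (fun j => V i j * (uo xs y0 i j - a0 i j - 0))) +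
       (sumI (fun i => sumI (fun m => eta i m * (xs i m - 0))) + sg * (0 - c)))) => T0 HT0.
    have := KI xs y0 a0 (fun m => T0 * Hm m) (fun _ => 0) 0 HF0 Ha0 ltac:(rewrite Hdot0; lra).
    have -> : sumI (fun i => sumI (fun m => eta i m * (xs i m - T0 * Hm m))) =
       sumI (fun i => sumI (fun m => eta i m * (xs i m - 0))) + T0 * (- sumI (fun m => Hm m * Hm m)).
      have -> : sumI (fun m => Hm m * Hm m) = sumI (fun i => sumI (fun m => eta i m * Hm m)).
        by rewrite (sum2_exch_scal eta Hm).
      rewrite -sumI_opp -sumI_scal -sumI_plus; apply sumI_ext => i; rewrite -sumI_opp -sumI_scal -sumI_plus; apply sumI_ext => j; ring.
    lra.
  move=> m; have := @sum1_zero _ (fun m => Hm m * Hm m) (fun m => Rle_0_sqr _) ltac:(lra) m.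
  move=> H; nra.
set Dj := fun j => sumI (fun i => V i j) - sg * w j.
have HD : forall j, Dj j = 0.
  have Hb : 0 <= - sumI (fun j => Dj j * Dj j).
    apply: (lin_lemma (r := r) (al := sumI (fun i => sumI (fun j => V i j * (uo xs y0 i j - a0 i j - 0))) +
       (sumI (fun i => sumI (fun m => eta i m * (xs i m - 0))) + sg * (0 - c)))) => T0 HT0.
    have := KI xs y0 a0 (fun _ => 0) (fun j => T0 * Dj j) (dot w (fun j => T0 * Dj j)) HF0 Ha0 (Rle_refl _).
    have E1 : sumI (fun i => sumI (fun j => V i j * (uo xs y0 i j - a0 i j - T0 * Dj j))) =
       sumI (fun i => sumI (fun j => V i j * (uo xs y0 i j - a0 i j - 0))) -
       T0 * sumI (fun j => sumI (fun i => V i j) * Dj j).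
      rewrite -(sum2_exch_scal V Dj) /Rminus (Ropp_mult_distr_r T0).
      rewrite -sumI_opp -sumI_scal -sumI_plus; apply sumI_ext => i; rewrite -sumI_opp -sumI_scal -sumI_plus; apply sumI_ext => j; ring.
    have E2 : sg * (dot w (fun j => T0 * Dj j) - c) = sg * (0 - c) + T0 * sumI (fun j => sg * w j * Dj j).
      rewrite /dot -sumI_scal.
      have -> : sumI (fun j => T0 * (sg * w j * Dj j)) = sg * rsum (fun j => w j * (T0 * Dj j)).
        rewrite rsumE -sumI_scal; apply sumI_ext => j; ring.
      ring.
    have E3 : sumI (fun j => sumI (fun i => V i j) * Dj j) - sumI (fun j => sg * w j * Dj j) = sumI (fun j => Dj j * Dj j).
      rewrite -sumI_minus; apply sumI_ext => j; rewrite /Dj; ring.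
    rewrite E1 E2 -E3; lra.
  move=> j; have := @sum1_zero _ (fun j => Dj j * Dj j) (fun j => Rle_0_sqr _) ltac:(lra) j.
  move=> H; nra.
have HsumV : forall j, sumI (fun i => V i j) = sg * w j by move=> j; have := HD j; rewrite /Dj; lra.
have Hsg0 : 0 < sg.
  case: Hsg => // Hs0; exfalso.
  have HV0 : forall i j, V i j = 0.
    move=> i j; apply: (@sum1_zero _ (fun i => V i j)) => [k|]; first by apply HV.
    rewrite HsumV -Hs0; lra.
  have := KI xs y0 a0 x0 (fun _ => 0) 0 HF0 Ha0 ltac:(rewrite Hdot0; lra).
  have -> : sumI (fun i => sumI (fun j => V i j * (uo xs y0 i j - a0 i j - 0))) = 0.
    transitivity (sumI (fun _ : 'I_nI => 0)); last by apply sumI_0.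
    apply sumI_ext => i; transitivity (sumI (fun _ : 'I_J => 0)); last by apply sumI_0.
    apply sumI_ext => j; rewrite HV0; ring.
  have -> : sumI (fun i => sumI (fun m => eta i m * (xs i m - x0 m))) = 0.
    transitivity (sumI (fun _ : 'I_nI => 0)); last by apply sumI_0.
    apply sumI_ext => i; transitivity (sumI (fun _ : 'I_M => 0)); last by apply sumI_0.
    apply sumI_ext => m; rewrite /xs; ring.
  rewrite -Hs0; lra.
pose mu := fun (i : 'I_nI) (j : 'I_J) => if Req_EM_T (w j) 0 then p i else V i j / (sg * w j).
pose lam := fun (i : 'I_nI) (m : 'I_M) => eta i m / (sg * p i).
have HwV : forall i j, sg * (w j * mu i j) = V i j.
  move=> i j; rewrite /mu; destruct (Req_EM_T (w j) 0) as [Hw|Hw] => /=.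
    have := @sum1_zero _ (fun i => V i j) (fun i => HV i j) ltac:(rewrite HsumV Hw; lra) i.
    move=> /= ->; rewrite Hw; ring.
  field; split; lra.
have Hpl : forall i m, sg * (p i * lam i m) = eta i m.
  move=> i m; rewrite /lam; field; split; [have := Hp i|]; lra.
exists mu, lam; split; [split|split].
- move=> i j; rewrite /mu; destruct (Req_EM_T (w j) 0) as [Hw|Hw] => /=; first by left; apply Hp.
  apply Rmult_le_pos; first by apply HV.
  left; apply Rinv_0_lt_compat; apply Rmult_lt_0_compat => //.
  by case: (Hw0 j) => // /esym.
- move=> j; rewrite /mu; destruct (Req_EM_T (w j) 0) as [Hw|Hw] => /=; first exact Hp1.
  rewrite rsumE; have -> : sumI (fun i => V i j / (sg * w j)) = sumI (fun i => V i j) * / (sg * w j).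
    by rewrite -sumI_scalr.
  rewrite HsumV; field; split => //; lra.
- move=> m; rewrite rsumE.
  apply (Rmult_eq_reg_l sg); last lra.
  rewrite -sumI_scal Rmult_0_r -(Heta m) /Hm; apply sumI_ext => i; apply Hpl.
move=> x y a HF Ha.
have := KI x y a (fun _ => 0) (fun _ => 0) 0 HF Ha ltac:(rewrite Hdot0; lra).
have -> : sumI (fun i => sumI (fun j => V i j * (uo x y i j - a i j - 0))) +
   (sumI (fun i => sumI (fun m => eta i m * (x i m - 0))) + sg * (0 - c)) =
   sg * (sumI (fun i => dot w (fun j => mu i j * uo x y i j) + p i * dot (lam i) (x i)) - dot w (Emu mu a)) - sg * c.
  have Eu : sg * sumI (fun i => dot w (fun j => mu i j * uo x y i j)) =
      sumI (fun i => sumI (fun j => V i j * uo x y i j)).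
    rewrite -sumI_scal; apply sumI_ext => i; rewrite /dot rsumE -sumI_scal; apply sumI_ext => j.
    rewrite -HwV; ring.
  have Ex : sg * sumI (fun i => p i * dot (lam i) (x i)) = sumI (fun i => sumI (fun m => eta i m * x i m)).
    rewrite -sumI_scal; apply sumI_ext => i; rewrite /dot rsumE -!sumI_scal; apply sumI_ext => m.
    rewrite -Hpl; ring.
  have Ea : sg * dot w (Emu mu a) = sumI (fun i => sumI (fun j => V i j * a i j)).
    rewrite sumI_exch /dot /Emu rsumE -sumI_scal; apply sumI_ext => j.
    rewrite rsumE -!sumI_scal; apply sumI_ext => i; rewrite -HwV; ring.
  have L1 : sumI (fun i => sumI (fun j => V i j * (uo x y i j - a i j - 0))) =
     sumI (fun i => sumI (fun j => V i j * uo x y i j)) - sumI (fun i => sumI (fun j => V i j * a i j)).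
    rewrite -sumI_minus; apply sumI_ext => i; rewrite -sumI_minus; apply sumI_ext => j; ring.
  have L2 : sumI (fun i => sumI (fun m => eta i m * (x i m - 0))) = sumI (fun i => sumI (fun m => eta i m * x i m)).
    apply sumI_ext => i; apply sumI_ext => m; ring.
  rewrite L1 L2 -Eu -Ex -Ea sumI_plus; ring.
move=> H.
have : sg * c < sg * (sumI (fun i => dot w (fun j => mu i j * uo x y i j) + p i * dot (lam i) (x i)) - dot w (Emu mu a)) by lra.
move/(Rmult_lt_reg_l _ _ _ Hsg0); lra.
Qed.

Lemma outcome_uo x y : outcome C Q x y = uo (fun _ => x) y.
Proof. by []. Qed.

Lemma weak (mu : 'I_nI -> vec J) (lam : rvec nI M) z x y : in_M1 mu -> (forall k, rsum (fun i => p i * lam i k) = 0) ->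
  Rm (outcome C Q x y) z -> in_X A b W T h x y ->
  Rbar_le (Rbar_minus (Rbar_sum (fun i => f_i p A b C W T h Q i (mu i) (lam i) w)) (beta Rm mu w)) (Fin (dot w z)).
Proof.
move=> [HM0 HM1] Hlam Hz HX.
set a := fun i j => outcome C Q x y i j - z j.
have Ha : Acc a by exact: (proj1 (transl _ _) Hz).
have Hb : Rbar_le (Fin (dot w (Emu mu a))) (beta Rm mu w).
  apply: (sup_lub _).1; by exists a.
set G := fun i => dot w (fun j => mu i j * (matvec C x j + matvec (Q i) (y i) j)) + p i * dot (lam i) x.
have Hf : forall i, Rbar_le (f_i p A b C W T h Q i (mu i) (lam i) w) (Fin (G i)).
  move=> i; apply: (inf_glb _).1; exists x, (y i); split => //.
  move: HX => [H1 [H2 [H3 H4]]]; split => //; split => //; split => //.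
have HS := Rbar_sum_le Hf.
have E1 : sumI G = dot w (Emu mu (outcome C Q x y)).
  rewrite /G sumI_plus.
  have -> : sumI (fun i => p i * dot (lam i) x) = 0.
    rewrite /dot.
    have -> : sumI (fun i => p i * rsum (fun k => lam i k * x k)) = sumI (fun k => rsum (fun i => p i * lam i k) * x k).
      rewrite -(sum2_exch_scal (fun i k => p i * lam i k) x); apply sumI_ext => i.
      rewrite rsumE -sumI_scal; apply sumI_ext => k; ring.
    transitivity (sumI (fun _ : 'I_M => 0)); last by apply sumI_0.
    apply sumI_ext => k; rewrite Hlam; ring.
  rewrite Rplus_0_r /dot /Emu rsumE sumI_exch; apply sumI_ext => j.
  rewrite rsumE -sumI_scal; apply sumI_ext => i; rewrite /outcome; ring.
have E2 : dot w (Emu mu a) = dot w (Emu mu (outcome C Q x y)) - dot w z.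
  rewrite /dot /Emu !rsumE -sumI_minus; apply sumI_ext => j.
  rewrite /a !rsumE.
  have : sumI (fun i => mu i j) = 1 by rewrite -(HM1 j).
  move=> Hs.
  have -> : sumI (fun i => mu i j * (outcome C Q x y i j - z j)) =
            sumI (fun i => mu i j * outcome C Q x y i j) - sumI (fun i => mu i j) * z j.
    rewrite -sumI_scalr -sumI_minus; apply sumI_ext => i; ring.
  rewrite Hs Rmult_1_l Rmult_minus_distr_l; reflexivity.
move: HS Hb; case: (Rbar_sum _) => [s| |]; case: (beta _ _) => [bb| |] //=; lra.
Qed.

Lemma core_rbar c (mu : 'I_nI -> vec J) (lam : rvec nI M) :
  (forall (x : 'I_nI -> vec M) (y : 'I_nI -> vec N) (a : rvec nI J),
      (forall i, in_F A b W T h i (x i) (y i)) -> Acc a ->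
      c <= sumI (fun i => dot w (fun j => mu i j * uo x y i j) + p i * dot (lam i) (x i))
           - dot w (Emu mu a)) ->
  Rbar_le (Fin c) (Rbar_minus (Rbar_sum (fun i => f_i p A b C W T h Q i (mu i) (lam i) w)) (beta Rm mu w)).
Proof.
move=> Hineq.
pose G := fun i x y => dot w (fun j => mu i j * (matvec C x j + matvec (Q i) y j)) + p i * dot (lam i) x.
have Hin : forall xf yf a, (forall i, in_F A b W T h i (xf i) (yf i)) -> Acc a ->
   c <= sumI (fun i => G i (xf i) (yf i)) - dot w (Emu mu a) by [].
have [x0f H0] := choice _ HFne.
have [y0f HF0] := choice _ H0.
clear H0.
have [a0 Ha0] := Acc_ex.
have Eb : beta Rm mu w = Rbar_sup (fun t => exists v, (exists a, Acc a /\ v = dot w (Emu mu a)) /\ t = Fin v).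
  rewrite /beta; f_equal; apply functional_extensionality => t; apply propositional_extensionality; split.
  - move=> [u [Hu ->]]; by exists (dot w (Emu mu u)); split => //; exists u.
  - move=> [v [[u [Hu ->]] ->]]; by exists u.
have [bb [Hbb1 [Hbb2 Hbb3]]] := @sup_fin (fun v => exists a, Acc a /\ v = dot w (Emu mu a))
   (sumI (fun i => G i (x0f i) (y0f i)) - c) (ex_intro _ _ (ex_intro _ a0 (conj Ha0 erefl)))
   ltac:(move=> v [a [Ha ->]]; have := Hin _ _ _ HF0 Ha; lra).
have Hbb : forall xf yf, (forall i, in_F A b W T h i (xf i) (yf i)) -> c + bb <= sumI (fun i => G i (xf i) (yf i)).
  move=> xf yf HF; apply Rnot_lt_le => Hlt.
  have [v [[a [Ha ->]] Hv]] := Hbb3 (bb - (sumI (fun i => G i (xf i) (yf i)) - c)) ltac:(lra).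
  have := Hin _ _ _ HF Ha; lra.
have Hfi : forall i, exists phi, f_i p A b C W T h Q i (mu i) (lam i) w = Fin phi /\
    (forall x y, in_F A b W T h i x y -> phi <= G i x y) /\
    (forall e, 0 < e -> exists x y, in_F A b W T h i x y /\ G i x y < phi + e).
  move=> i.
  have Ef : f_i p A b C W T h Q i (mu i) (lam i) w =
     Rbar_inf (fun t => exists v, (exists x y, in_F A b W T h i x y /\ v = G i x y) /\ t = Fin v).
    rewrite /f_i; f_equal; apply functional_extensionality => t; apply propositional_extensionality; split.
    - move=> [x [y [Hxy ->]]]; exists (G i x y); split => //; by exists x, y.
    - move=> [v [[x [y [Hxy ->]]] ->]]; by exists x, y.
  have Hlb : forall v, (exists x y, in_F A b W T h i x y /\ v = G i x y) ->
      c + bb - \big[Rplus/0]_(k | k != i) G k (x0f k) (y0f k) <= v.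
    move=> v [x [y [Hxy ->]]].
    pose xf := fun k => if k == i then x else x0f k.
    pose yf := fun k => if k == i then y else y0f k.
    have HF : forall k, in_F A b W T h k (xf k) (yf k).
      move=> k; rewrite /xf /yf; case: eqP => [->|_] //.
    have := Hbb xf yf HF; rewrite (sumI_D1 _ i) /xf /yf eqxx.
    have -> : \big[Rplus/0]_(k | k != i) G k (if k == i then x else x0f k) (if k == i then y else y0f k) =
              \big[Rplus/0]_(k | k != i) G k (x0f k) (y0f k).
      by apply: eq_bigr => k /negbTE ->.
    lra.
  have [phi [Hp1' [Hp2 Hp3]]] := @inf_fin (fun v => exists x y, in_F A b W T h i x y /\ v = G i x y)
     (c + bb - \big[Rplus/0]_(k | k != i) G k (x0f k) (y0f k))
     (ex_intro _ _ (ex_intro _ (x0f i) (ex_intro _ (y0f i) (conj (HF0 i) erefl)))) Hlb.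
  exists phi; split; first by rewrite Ef.
  split.
  - move=> x y Hxy; apply Hp2; by exists x, y.
  - move=> e He; have [v [[x [y [Hxy ->]]] Hv]] := Hp3 e He; by exists x, y.
have [phif Hphif] := choice _ Hfi.
have -> : (fun i => f_i p A b C W T h Q i (mu i) (lam i) w) = (fun i => Fin (phif i)).
  apply functional_extensionality => i; exact: (Hphif i).1.
rewrite Rbar_sum_fin Eb Hbb1 /=.
apply Rnot_lt_le => Hlt.
set kap := sumI (fun _ : 'I_nI => 1).
have Hkap : 0 <= kap by apply sumI_ge0 => ?; lra.
set eps := (c - (sumI phif + - bb)) / (kap + 1).
have Heps : 0 < eps by apply Rdiv_lt_0_compat; lra.
have Hch : forall i, exists x y, in_F A b W T h i x y /\ G i x y < phif i + eps.
  move=> i; exact: ((Hphif i).2.2 eps Heps).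
have [xf H1] := choice _ Hch.
have [yf H2] := choice _ H1.
have := Hbb xf yf (fun i => (H2 i).1).
have : sumI (fun i => G i (xf i) (yf i)) <= sumI phif + eps * kap.
  rewrite -sumI_scal -sumI_plus; apply sumI_le => i; have := (H2 i).2; lra.
have : eps * (kap + 1) = c - (sumI phif + - bb) by rewrite /eps; field; lra.
nra.
Qed.

Lemma main_eq : P1 Rm A b C W T h Q w =
  Rbar_sup (fun v => exists (mu : 'I_nI -> vec J) (lam : rvec nI M),
     in_M1 mu /\ (forall k, rsum (fun i => (p i * lam i k)%R) = 0%R) /\
     v = Rbar_minus (Rbar_sum (fun i => f_i p A b C W T h Q i (mu i) (lam i) w))
                    (beta Rm mu w)).
Proof.
rewrite /P1.
set SL := fun v => _.
set SR := fun v => _.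
have HL := inf_glb SL.
have [R1 R2] := sup_lub SR.
apply Rbar_le_antisym.
- apply: (dens HL) => c g Hg Hy.
  have Hopt : forall z x y, Rm (outcome C Q x y) z -> in_X A b W T h x y -> c + g <= dot w z.
    move=> z x y Hz HX; have := Hy (Fin (dot w z)) (ex_intro _ z (ex_intro _ x (ex_intro _ y (conj Hz (conj HX erefl))))).
    by [].
  have [mu [lam [HM [Hlam Hineq]]]] := core Hg Hopt.
  apply: Rbar_le_trans (core_rbar Hineq) _.
  apply R1; exists mu, lam; by split.
- apply R2 => x [mu [lam [HM [Hlam ->]]]].
  apply HL.2 => y [z [x' [y' [Hz [HX ->]]]]].
  exact: (weak HM Hlam Hz HX).
Qed.

End Main.

Local Close Scope R_scope.

Theorem theorem5p1 (nI J K M N L : nat) (HI : (2 <= nI)%nat)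
  (p : 'I_nI -> R) (Hp : forall i, (0 < p i)%R) (Hp1 : rsum p = 1%R)
  (Rm : set_valued nI J) (HRm : is_mcrm Rm)
  (A : 'I_K -> 'I_M -> R) (b : vec K) (C : 'I_J -> 'I_M -> R)
  (W : 'I_nI -> 'I_L -> 'I_N -> R) (T : 'I_nI -> 'I_L -> 'I_M -> R) (h : rvec nI L)
  (Q : 'I_nI -> 'I_J -> 'I_N -> R)
  (HXne : exists x y, in_X A b W T h x y)
  (HXbd : exists B : R, forall x y, in_X A b W T h x y ->
            (forall k, (Rabs (x k) <= B)%R) /\ (forall i k, (Rabs (y i k) <= B)%R))
  (HFne : forall i, exists x y, in_F A b W T h i x y)
  (HFbd : forall i, exists B : R, forall x y, in_F A b W T h i x y ->
            (forall k, (Rabs (x k) <= B)%R) /\ (forall k, (Rabs (y k) <= B)%R))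
  (w : vec J) (Hw0 : nonnegv w) (Hw1 : exists j, w j <> 0%R) :
  P1 Rm A b C W T h Q w =
  Rbar_sup (fun v => exists (mu : 'I_nI -> vec J) (lam : rvec nI M),
     in_M1 mu /\ (forall k, rsum (fun i => (p i * lam i k)%R) = 0%R) /\
     v = Rbar_minus (Rbar_sum (fun i => f_i p A b C W T h Q i (mu i) (lam i) w))
                    (beta Rm mu w)).
Proof. by apply: main_eq. Qed.
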